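(* Let $\mathcal{A}\subseteq\mathcal{B}$ be sub-$\sigma$-algebras of a complete probability space $(\Omega,\mathcal{F},P)$, where $\mathcal{B}$ is generated by a countable family of events (together with the $P$-null events). Let $L$ be a linear subspace of $L_\infty(\mathcal{B})$. Let $M:L^+_\infty(\mathcal{B})\to L^+_\infty(\mathcal{A})$ be a regular sublinear operator and $m:L^+_\infty(\mathcal{B})\to L^+_\infty(\mathcal{A})$ a superlinear operator. Let $x:L\to L_\infty(\mathcal{A})$ be a linear operator satisfying \[m(Z)+x(X)\le M(Y)\qquad \text{for all }X\in L,\ Y,Z\in L^+_\infty(\mathcal{B}) \text{ with } Z+X\le Y.\] Then $x$ admits a monotone linear extension $x:L_\infty(\mathcal{B})\to L_\infty(\mathcal{A})$ which is continuous from above and satisfies \[m(Z)+x(X)\le M(Y)\qquad \text{for all }X\in L_\infty(\mathcal{B}),\ Y,Z\in L^+_\infty(\mathcal{B}) \text{ with } Z+X\le Y,\] equivalently $m(X)\le x(X)\le M(X)$ for all $X\in L^+_\infty(\mathcal{B})$.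
   Context: All (in)equalities between random variables hold $P$-a.s. Sublinear: $M(X+Y)\le M(X)+M(Y)$, $M(\lambda X)=\lambda M(X)$ for real $\lambda\ge0$. Superlinear: $m(X+Y)\ge m(X)+m(Y)$, $m(\lambda X)=\lambda m(X)$ for real $\lambda\ge0$. Regular: for every nonincreasing sequence $X_n\downarrow0$ $P$-a.s., $M(X_n)\to0$ $P$-a.s. Monotone: $X\ge X'\Rightarrow x(X)\ge x(X')$. Continuous from above: for every nonincreasing sequence $X_n$ with $P$-a.s. limit $X$, $x(X_n)\downarrow x(X)$ $P$-a.s. *)

(* Defs.v *)
From HB Require Import structures.
From mathcomp Require Import all_boot all_order all_algebra.
From mathcomp Require Import all_classical all_reals all_analysis.
Set Implicit Arguments. Unset Strict Implicit. Unset Printing Implicit Defensive.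
Import Order.TTheory GRing.Theory Num.Theory.
Local Open Scope classical_set_scope.
Local Open Scope ring_scope.

Section defs.
Context {d : measure_display} {T : measurableType d} {R : realType}.

Definition pl_sub_sigma_algebra (A : set (set T)) : Prop :=
  sigma_algebra setT A /\ A `<=` measurable.

Definition pl_null_events (P : probability T R) : set (set T) :=
  [set N | measurable N /\ P N = 0%E].

Definition pl_measurable_wrt (A : set (set T)) (f : T -> R) : Prop :=
  forall U : set R, measurable U -> A (f @^-1` U).

(** Membership of (the a.s.-class of) f in L_infty(A): f is a.s. equal to an
    A-measurable function and is essentially bounded. *)
Definition pl_Linf (P : probability T R) (A : set (set T)) (f : T -> R) : Prop :=
  (exists g : T -> R, pl_measurable_wrt A g /\ {ae P, forall w, f w = g w}) /\
  (exists C : R, {ae P, forall w, `|f w| <= C}).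

Definition pl_Linfp (P : probability T R) (A : set (set T)) (f : T -> R) : Prop :=
  pl_Linf P A f /\ {ae P, forall w, 0 <= f w}.

End defs.

(* Main.v *)
Require Import Defs.
From HB Require Import structures.
From mathcomp Require Import all_boot all_order all_algebra.
From mathcomp Require Import all_classical all_reals all_analysis.
From mathcomp Require Import measurable_realfun.
From mathcomp Require Import lra ring.
Import Order.TTheory GRing.Theory Num.Theory numFieldNormedType.Exports.
Local Open Scope classical_set_scope.
Local Open Scope ring_scope.
Set Implicit Arguments. Unset Strict Implicit.
Section aeh.
Context d (T : measurableType d) (R : realType) (P : probability T R).
Lemma ae1 {Q1 Q : T -> Prop} : (\forall w \ae P, Q1 w) ->
  (forall w, Q1 w -> Q w) -> \forall w \ae P, Q w.
Proof. by move=> h1 H; apply: filterS h1. Qed.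
Lemma ae2 {Q1 Q2 Q : T -> Prop} : (\forall w \ae P, Q1 w) -> (\forall w \ae P, Q2 w) ->
  (forall w, Q1 w -> Q2 w -> Q w) -> \forall w \ae P, Q w.
Proof. by move=> h1 h2 H; apply: filterS2 h1 h2. Qed.
Lemma ae3 {Q1 Q2 Q3 Q : T -> Prop} : (\forall w \ae P, Q1 w) -> (\forall w \ae P, Q2 w) ->
  (\forall w \ae P, Q3 w) ->
  (forall w, Q1 w -> Q2 w -> Q3 w -> Q w) -> \forall w \ae P, Q w.
Proof. by move=> h1 h2 h3 H; apply: filterS3 h1 h2 h3. Qed.
Lemma ae4 {Q1 Q2 Q3 Q4 Q : T -> Prop} : (\forall w \ae P, Q1 w) -> (\forall w \ae P, Q2 w) ->
  (\forall w \ae P, Q3 w) -> (\forall w \ae P, Q4 w) ->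
  (forall w, Q1 w -> Q2 w -> Q3 w -> Q4 w -> Q w) -> \forall w \ae P, Q w.
Proof.
move=> h1 h2 h3 h4 H.
have h12 : \forall w \ae P, Q1 w /\ Q2 w by apply: (ae2 h1 h2) => w ? ?.
have h34 : \forall w \ae P, Q3 w /\ Q4 w by apply: (ae2 h3 h4) => w ? ?.
by apply: (ae2 h12 h34) => w [? ?] [? ?]; exact: H.
Qed.
Lemma ae5 {Q1 Q2 Q3 Q4 Q5 Q : T -> Prop} : (\forall w \ae P, Q1 w) -> (\forall w \ae P, Q2 w) ->
  (\forall w \ae P, Q3 w) -> (\forall w \ae P, Q4 w) -> (\forall w \ae P, Q5 w) ->
  (forall w, Q1 w -> Q2 w -> Q3 w -> Q4 w -> Q5 w -> Q w) -> \forall w \ae P, Q w.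
Proof.
move=> h1 h2 h3 h4 h5 H.
have h12 : \forall w \ae P, Q1 w /\ Q2 w by apply: (ae2 h1 h2) => w ? ?.
have h34 : \forall w \ae P, Q3 w /\ Q4 w /\ Q5 w.
  by apply: (ae3 h3 h4 h5) => w ? ? ?.
by apply: (ae2 h12 h34) => w [? ?] [? [? ?]]; exact: H.
Qed.
End aeh.
Arguments ae1 {d T R P Q1 Q}.
Arguments ae2 {d T R P Q1 Q2 Q}.
Arguments ae3 {d T R P Q1 Q2 Q3 Q}.
Arguments ae4 {d T R P Q1 Q2 Q3 Q4 Q}.
Arguments ae5 {d T R P Q1 Q2 Q3 Q4 Q5 Q}.
Section basics.
Context d (T : measurableType d) (R : realType) (P : probability T R).
Variable S : set (set T).
Hypothesis hS : pl_sub_sigma_algebra S.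

Lemma mwrt_TA (g : T -> R) :
  pl_measurable_wrt S g <-> measurable_fun (setT : set (g_sigma_algebraType S)) g.
Proof.
have E := measurable_g_measurableTypeE hS.1.
split.
- move=> hg _ Y mY; rewrite setTI E; exact: hg.
- move=> hg Y mY; have := hg measurableT Y mY; rewrite setTI E; exact.
Qed.

Lemma mwrt_meas (g : T -> R) : pl_measurable_wrt S g -> measurable_fun setT g.
Proof. move=> hg _ Y mY; rewrite setTI; apply: hS.2; exact: hg. Qed.

Lemma Linf_ae (f f' : T -> R) : pl_Linf P S f ->
  {ae P, forall w, f w = f' w} -> pl_Linf P S f'.
Proof.
move=> [[g [mg fg]] [C fC]] ff'; split.
- exists g; split => //.
  by apply: (ae2 ff' fg) => w <-.
- by exists C; apply: (ae2 ff' fC) => w <-.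
Qed.

Lemma Linf_lin (a b : R) (f g : T -> R) : pl_Linf P S f -> pl_Linf P S g ->
  pl_Linf P S (fun w => a * f w + b * g w).
Proof.
move=> [[f1 [mf1 ff1]] [C1 fC1]] [[g1 [mg1 gg1]] [C2 gC2]]; split.
- exists (fun w => a * f1 w + b * g1 w); split.
    apply/mwrt_TA; apply: measurable_funD; apply: measurable_funM => //;
    exact/mwrt_TA.
  by apply: (ae2 ff1 gg1) => w -> ->.
- exists (`|a| * C1 + `|b| * C2); apply: (ae2 fC1 gC2) => w h1 h2.
  by rewrite (le_trans (ler_normD _ _))// lerD// normrM ler_wpM2l.
Qed.

Lemma Linf_cst (c : R) : pl_Linf P S (fun _ => c).
Proof.
split.
- exists (fun _ => c); split; last exact: aeW.
  apply/mwrt_TA; exact: measurable_cst.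
- by exists `|c|; apply: aeW.
Qed.

Lemma Linf_max (f g : T -> R) : pl_Linf P S f -> pl_Linf P S g ->
  pl_Linf P S (fun w => Num.max (f w) (g w)).
Proof.
move=> [[f1 [mf1 ff1]] [C1 fC1]] [[g1 [mg1 gg1]] [C2 gC2]]; split.
- exists (fun w => Num.max (f1 w) (g1 w)); split.
    apply/mwrt_TA; apply: measurable_maxr; exact/mwrt_TA.
  by apply: (ae2 ff1 gg1) => w -> ->.
- exists (C1 + C2); apply: (ae2 fC1 gC2) => w h1 h2.
  have c10 : 0 <= C1 by exact: le_trans h1.
  have c20 : 0 <= C2 by exact: le_trans h2.
  rewrite /Num.max; case: ifP => _.
    by rewrite (le_trans h2)// lerDr.
  by rewrite (le_trans h1)// lerDl.
Qed.

Lemma Linfp_ae (f f' : T -> R) : pl_Linfp P S f ->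
  {ae P, forall w, f w = f' w} -> pl_Linfp P S f'.
Proof.
move=> [hf f0] ff'; split; first exact: Linf_ae ff'.
by apply: (ae2 ff' f0) => w <-.
Qed.

Lemma Linfp_lin (a b : R) (f g : T -> R) : 0 <= a -> 0 <= b ->
  pl_Linfp P S f -> pl_Linfp P S g ->
  pl_Linfp P S (fun w => a * f w + b * g w).
Proof.
move=> a0 b0 [hf f0] [hg g0]; split; first exact: Linf_lin.
apply: (ae2 f0 g0) => w h1 h2.
by apply: addr_ge0; apply: mulr_ge0.
Qed.

Lemma Linfp_cst (c : R) : 0 <= c -> pl_Linfp P S (fun _ => c).
Proof. by move=> c0; split; [exact: Linf_cst|exact: aeW]. Qed.

Lemma Linfp_Linf f : pl_Linfp P S f -> pl_Linf P S f.
Proof. by case. Qed.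

End basics.
Section basics2.
Context d (T : measurableType d) (R : realType) (P : probability T R).
Variable S : set (set T).
Hypothesis hS : pl_sub_sigma_algebra S.

Lemma Linf_add (f g : T -> R) : pl_Linf P S f -> pl_Linf P S g ->
  pl_Linf P S (fun w => f w + g w).
Proof.
move=> hf hg; have := Linf_lin hS 1 1 hf hg.
by rewrite (_ : (fun w => 1 * f w + 1 * g w) = (fun w => f w + g w)) //;
  apply/funext => w; rewrite !mul1r.
Qed.

Lemma Linf_sub (f g : T -> R) : pl_Linf P S f -> pl_Linf P S g ->
  pl_Linf P S (fun w => f w - g w).
Proof.
move=> hf hg; have := Linf_lin hS 1 (-1) hf hg.
by rewrite (_ : (fun w => 1 * f w + -1 * g w) = (fun w => f w - g w)) //;
  apply/funext => w; rewrite mul1r mulN1r.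
Qed.

Lemma Linf_scal (c : R) (f : T -> R) : pl_Linf P S f ->
  pl_Linf P S (fun w => c * f w).
Proof.
move=> hf; have := Linf_lin hS c 0 hf hf.
by rewrite (_ : (fun w => c * f w + 0 * f w) = (fun w => c * f w)) //;
  apply/funext => w; rewrite mul0r addr0.
Qed.

Lemma Linf_opp (f : T -> R) : pl_Linf P S f -> pl_Linf P S (fun w => - f w).
Proof.
move=> hf; have := Linf_scal (-1) hf.
by rewrite (_ : (fun w => -1 * f w) = (fun w => - f w)) //;
  apply/funext => w; rewrite mulN1r.
Qed.

Lemma Linfp_add (f g : T -> R) : pl_Linfp P S f -> pl_Linfp P S g ->
  pl_Linfp P S (fun w => f w + g w).
Proof.
move=> hf hg; have := Linfp_lin hS ler01 ler01 hf hg.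
by rewrite (_ : (fun w => 1 * f w + 1 * g w) = (fun w => f w + g w)) //;
  apply/funext => w; rewrite !mul1r.
Qed.

Lemma Linfp_scal (c : R) (f : T -> R) : 0 <= c -> pl_Linfp P S f ->
  pl_Linfp P S (fun w => c * f w).
Proof.
move=> c0 hf; have := Linfp_lin hS c0 (lexx 0) hf hf.
by rewrite (_ : (fun w => c * f w + 0 * f w) = (fun w => c * f w)) //;
  apply/funext => w; rewrite mul0r addr0.
Qed.

Lemma Linfp_pos (f : T -> R) : pl_Linf P S f ->
  pl_Linfp P S (fun w => Num.max (f w) 0).
Proof.
move=> hf; split; first exact: Linf_max hf (Linf_cst _ hS 0).
by apply: aeW => w; rewrite le_max lexx orbT.
Qed.

End basics2.

Lemma posneg (R : realType) (x : R) : Num.max x 0 - Num.max (- x) 0 = x.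
Proof.
case: (boolP (0 <= x)) => hx.
- have -> : Num.max x 0 = x by apply/max_idPl.
  have -> : Num.max (- x) 0 = 0 by apply/max_idPr; rewrite lerNl oppr0.
  by rewrite subr0.
- have hx' : x < 0 by rewrite ltNge.
  have -> : Num.max x 0 = 0 by apply/max_idPr; exact: ltW.
  have -> : Num.max (- x) 0 = - x by apply/max_idPl; rewrite lerNr oppr0 ltW //.
  by rewrite sub0r opprK.
Qed.
Section essinf.
Context d (T : measurableType d) (R : realType) (P : probability T R).
Variable A : set (set T).
Hypothesis hA : pl_sub_sigma_algebra A.

Definition rep (f : T -> R) : T -> R :=
  match pselect (exists g : T -> R, pl_measurable_wrt A g /\ {ae P, forall w, f w = g w})
  with left e => proj1_sig (cid e) | right _ => f end.

Lemma repP f : pl_Linf P A f ->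
  pl_measurable_wrt A (rep f) /\ {ae P, forall w, f w = rep f w}.
Proof.
move=> [ex _]; rewrite /rep; case: pselect => [e|//].
exact: (proj2_sig (cid e)).
Qed.

Lemma rep_Linf f : pl_Linf P A f -> pl_Linf P A (rep f).
Proof. by move=> hf; have [_ e] := repP hf; exact: Linf_ae e. Qed.

Section main_essinf.
Variables (F : (T -> R) -> Prop) (f0 g0 : T -> R).
Hypotheses (Ff0 : F f0) (FL : forall f, F f -> pl_Linf P A f) (g0L : pl_Linf P A g0)
  (g0lb : forall f, F f -> {ae P, forall w, g0 w <= f w}).

Let gr := rep g0.
Let cl (f : T -> R) w := Num.max (rep f w) (gr w).
Let H (C : nat -> T -> R) w := inf (range (fun n => cl (C n) w)).
Let psi (t : R) := atan t + pi.
Let valid (C : nat -> T -> R) := forall n, F (C n).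

Lemma H_hlb (C : nat -> T -> R) (w : T) : has_lbound (range (fun n => cl (C n) w)).
Proof. by exists (gr w) => _ [n _ <-]; rewrite /cl le_max lexx orbT. Qed.

Lemma H_lb (C : nat -> T -> R) (w : T) : gr w <= H C w.
Proof.
apply: lb_le_inf; first by exists (cl (C 0%N) w), 0%N.
by move=> _ [n _ <-]; rewrite /cl le_max lexx orbT.
Qed.

Lemma H_le (C : nat -> T -> R) (w : T) n : H C w <= cl (C n) w.
Proof. by apply: ge_inf; [exact: H_hlb|exists n]. Qed.

Lemma H_glb (C : nat -> T -> R) (w : T) k : (forall n, k <= cl (C n) w) -> k <= H C w.
Proof.
move=> hk; apply: lb_le_inf; first by exists (cl (C 0%N) w), 0%N.
by move=> _ [n _ <-].
Qed.

Lemma cl_meas (f : T -> R) : F f -> pl_measurable_wrt A (cl f).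
Proof.
move=> Ff; apply/(mwrt_TA hA); apply: measurable_maxr; apply/(mwrt_TA hA).
- exact: (repP (FL Ff)).1.
- exact: (repP g0L).1.
Qed.

Lemma H_meas (C : nat -> T -> R) : valid C -> pl_measurable_wrt A (H C).
Proof.
move=> vC; apply/(mwrt_TA hA).
have -> : H C = (fun x => infs ((fun n => cl (C n)) ^~ x) 0%N).
  apply/funext => x; rewrite /H /infs /= /sdrop; congr inf.
  by apply/seteqP; split => _ [n _ <-]; exists n.
apply: measurable_fun_infs => [t _|n]; first exact: H_hlb.
exact/(mwrt_TA hA)/cl_meas.
Qed.

Lemma psi_ge0 t : 0 <= psi t.
Proof.
rewrite /psi; have := atan_gtNpi2 t; have := pi_gt0 R => h1 h2.
lra.
Qed.

Lemma psi_le t : psi t <= 2 * pi.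
Proof. rewrite /psi; have := atan_ltpi2 t; have := pi_gt0 R => h1 h2. lra. Qed.

Lemma psiH_meas (C : nat -> T -> R) : valid C -> measurable_fun setT (fun w => psi (H C w)).
Proof.
move=> vC; rewrite /psi.
apply: (@measurable_funD _ _ _ _ (fun w => atan (H C w)) (fun _ => pi)) => //.
apply: measurableT_comp; last exact: (mwrt_meas hA (H_meas vC)).
apply: continuous_measurable_fun => x; exact: continuous_atan.
Qed.

Let I (C : nat -> T -> R) := (\int[P]_w (psi (H C w))%:E)%E.

Lemma I_fin (C : nat -> T -> R) : valid C -> I C \is a fin_num.
Proof.
move=> vC; rewrite ge0_fin_numE; last first.
  by apply: integral_ge0 => w _; rewrite lee_fin psi_ge0.
apply: (@le_lt_trans _ _ (\int[P]_(w in setT) (cst (2 * pi)%:E w))%E).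
  apply: ge0_le_integral => //.
  - by move=> w _; rewrite lee_fin psi_ge0.
  - by apply/measurable_EFinP; exact: psiH_meas.
  - by move=> w _; rewrite /= lee_fin psi_le.
by rewrite integral_cst //= probability_setT mule1 ltry.
Qed.

Let J (C : nat -> T -> R) := fine (I C).

Lemma JE (C : nat -> T -> R) : valid C -> (J C)%:E = I C.
Proof. by move=> vC; rewrite fineK // I_fin. Qed.

Lemma J_ge0 (C : nat -> T -> R) : valid C -> 0 <= J C.
Proof.
move=> vC; rewrite -lee_fin JE //.
by apply: integral_ge0 => w _; rewrite lee_fin psi_ge0.
Qed.

Lemma J_mono (C1 C2 : nat -> T -> R) : valid C1 -> valid C2 -> (forall w, H C1 w <= H C2 w) ->
  J C1 <= J C2.
Proof.
move=> v1 v2 h12; rewrite -lee_fin !JE //.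
apply: ge0_le_integral => //.
- by move=> w _; rewrite lee_fin psi_ge0.
- by apply/measurable_EFinP; exact: psiH_meas.
- by apply/measurable_EFinP; exact: psiH_meas.
- by move=> w _; rewrite lee_fin /psi lerD2r le_atan.
Qed.

Let JS := [set J C | C in valid].

Lemma JS_n0 : JS !=set0.
Proof. by exists (J (fun _ => f0)), (fun _ => f0). Qed.

Lemma JS_lb : has_lbound JS.
Proof. by exists 0 => _ [C vC <-]; exact: J_ge0. Qed.

Let s := inf JS.

Lemma approx : exists Ck : nat -> nat -> T -> R,
  forall k, valid (Ck k) /\ J (Ck k) < s + k.+1%:R^-1.
Proof.
have H0 : forall k : nat, exists C, valid C /\ J C < s + k.+1%:R^-1.
  move=> k.
  have [_ [C vC <-] hC] := @inf_adherent R JS k.+1%:R^-1 ltac:(by []) (conj JS_n0 JS_lb).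
  by exists C.
by have [Ck hCk] := choice H0; exists Ck.
Qed.

Lemma essinf_ex : exists h : T -> R,
  pl_Linf P A h /\ (forall f, F f -> {ae P, forall w, h w <= f w}) /\
  (forall k : T -> R, (forall f, F f -> {ae P, forall w, k w <= f w}) ->
     {ae P, forall w, k w <= h w}).
Proof.
have [Ck hCk] := approx.
pose Cs (n : nat) : T -> R := match n with 0%N => f0
  | n'.+1 => match (unpickle n' : option (nat * nat)) with
             Some (k, j) => Ck k j | None => f0 end end.
have vCs : valid Cs.
  case=> [|n] //=; case: (unpickle n) => [[k j]|] //; exact: (hCk k).1.
have CsE k j : Cs (pickle (k, j)).+1 = Ck k j by rewrite /= pickleK.
have HCs_le k w : H Cs w <= H (Ck k) w.
  apply: H_glb => j; rewrite -CsE; exact: H_le.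
have JCs_le_s : J Cs <= s.
  apply/ler_addgt0Pr => e e0.
  have [k hk] : exists k : nat, k.+1%:R^-1 < e.
    have [k hk] := ltr_add_invr e0.
    by exists k; move: hk; rewrite add0r.
  apply: (le_trans (J_mono vCs (hCk k).1 (HCs_le k))).
  apply: ltW; apply: (lt_le_trans (hCk k).2); rewrite lerD2l; exact: ltW.
have s_le C : valid C -> s <= J C.
  by move=> vC; apply: ge_inf; [exact: JS_lb|exists C].
have clE f : F f -> {ae P, forall w, cl f w = f w}.
  move=> Ff; have [_ e1] := repP (FL Ff); have [_ e2] := repP g0L.
  apply: (ae3 e1 e2 (g0lb Ff)) => w h1 h2 h3.
  by rewrite /cl -h1 /gr -h2; apply/max_idPl.
exists (H Cs); split; [|split].
- split.
    by exists (H Cs); split; [exact: H_meas|exact: aeW].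
  have [_ [C1 hC1]] := g0L; have [_ [C2 hC2]] := FL Ff0.
  have [_ e2] := repP g0L.
  exists (C1 + C2).
  apply: (ae4 hC1 hC2 e2 (clE _ Ff0)) => w h1 h2 h3 h4.
  have c10 : 0 <= C1 by exact: le_trans h1.
  have c20 : 0 <= C2 by exact: le_trans h2.
  rewrite ler_norml; apply/andP; split.
    apply: (le_trans _ (H_lb Cs w)); rewrite /gr -h3.
    move: h1; rewrite ler_norml => /andP[h1 _]; apply: (le_trans _ h1).
    by rewrite lerN2 lerDl.
  apply: (le_trans (H_le Cs w 0%N)) => /=; rewrite h4.
  move: h2; rewrite ler_norml => /andP[_ h2]; apply: (le_trans h2).
  by rewrite lerDr.
- move=> f Ff.
  pose C' (n : nat) : T -> R := if n is n'.+1 then Cs n' else f.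
  have vC' : valid C' by case.
  have HC'_le w : H C' w <= H Cs w.
    by apply: H_glb => n; exact: (H_le C' w n.+1).
  have HC'_f w : H C' w <= cl f w by exact: (H_le C' w 0%N).
  have JJ : J Cs <= J C' by apply: le_trans (s_le _ vC').
  pose a w := psi (H Cs w); pose b w := psi (H C' w).
  have ba w : b w <= a w by rewrite /a /b /psi lerD2r le_atan.
  have mab : measurable_fun setT (fun w => (a w - b w)%:E).
    by apply/measurable_EFinP; apply: measurable_funB; exact: psiH_meas.
  have int0 : (\int[P]_w `|(a w - b w)%:E| = 0)%E.
    have eqI : I Cs = (I C' + \int[P]_w (a w - b w)%:E)%E.
      rewrite /I -ge0_integralD //.
      + by apply: eq_integral => w _; rewrite -EFinD addrC subrK.
      + by move=> w _; rewrite lee_fin psi_ge0.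
      + by apply/measurable_EFinP; exact: psiH_meas.
      + by move=> w _; rewrite lee_fin subr_ge0.
    have ge0 : (0 <= \int[P]_w (a w - b w)%:E)%E.
      by apply: integral_ge0 => w _; rewrite lee_fin subr_ge0.
    have fin2 : (\int[P]_w (a w - b w)%:E)%E \is a fin_num.
      by have := I_fin vCs; rewrite eqI fin_numD => /andP[].
    rewrite (eq_integral (fun w => (a w - b w)%:E)); last first.
      by move=> w _; rewrite gee0_abs // lee_fin subr_ge0.
    apply/eqP; rewrite eq_le ge0 andbT.
    have eqJ : J Cs = J C' + fine (\int[P]_w (a w - b w)%:E)%E.
      by apply: EFin_inj; rewrite EFinD !JE // fineK.
    rewrite -(fineK fin2) lee_fin; move: JJ; rewrite eqJ; lra.
  have := (ae_eq_integral_abs P measurableT mab).1 int0.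
  move=> hae; have [_ e2] := repP g0L.
  apply: (ae2 hae (clE _ Ff)) => w h1 h2.
  have abw : a w = b w.
    by have := h1 Logic.I; rewrite /= => /eqP; rewrite eqe subr_eq0 => /eqP.
  have : H Cs w = H C' w.
    move: abw; rewrite /a /b /psi => /addIr /(congr1 tan); rewrite !atanK.
    by [].
  by move=> ->; rewrite -h2.
- move=> k hk.
  have hn : {ae P, forall w, forall n, k w <= cl (Cs n) w}.
    apply: ae_foralln => n.
    by apply: (ae2 (hk _ (vCs n)) (clE _ (vCs n))) => w h1 ->.
  by apply: (ae1 hn) => w hw; apply: H_glb.
Qed.

End main_essinf.
End essinf.
Section mainsec.
Context d (T : measurableType d) (R : realType) (P : probability T R).
Variables (A B : set (set T)).
Hypotheses (subA : pl_sub_sigma_algebra A) (subB : pl_sub_sigma_algebra B)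
  (AB : A `<=` B).
Variable L : (T -> R) -> Prop.
Hypotheses (L_sub : forall X, L X -> pl_Linf P B X)
  (L_ae : forall X X', L X -> {ae P, forall w, X w = X' w} -> L X')
  (L0 : L (fun _ => 0))
  (L_lin : forall (a b : R) X Y, L X -> L Y -> L (fun w => a * X w + b * Y w)).
Variables (M m : (T -> R) -> (T -> R)).
Hypotheses (M_wd : forall X X', pl_Linfp P B X -> pl_Linfp P B X' ->
     {ae P, forall w, X w = X' w} -> {ae P, forall w, M X w = M X' w})
  (M_range : forall X, pl_Linfp P B X -> pl_Linfp P A (M X))
  (M_subadd : forall X Y, pl_Linfp P B X -> pl_Linfp P B Y ->
     {ae P, forall w, M (fun u => X u + Y u) w <= M X w + M Y w})
  (M_hom : forall (l : R) X, 0 <= l -> pl_Linfp P B X ->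
     {ae P, forall w, M (fun u => l * X u) w = l * M X w})
  (M_regular : forall Xn : nat -> T -> R, (forall n, pl_Linfp P B (Xn n)) ->
     {ae P, forall w, forall n, Xn n.+1 w <= Xn n w} ->
     {ae P, forall w, (fun n => Xn n w) @ \oo --> (0:R)} ->
     {ae P, forall w, (fun n => M (Xn n) w) @ \oo --> (0:R)})
  (m_wd : forall X X', pl_Linfp P B X -> pl_Linfp P B X' ->
     {ae P, forall w, X w = X' w} -> {ae P, forall w, m X w = m X' w})
  (m_range : forall X, pl_Linfp P B X -> pl_Linfp P A (m X))
  (m_superadd : forall X Y, pl_Linfp P B X -> pl_Linfp P B Y ->
     {ae P, forall w, m X w + m Y w <= m (fun u => X u + Y u) w})
  (m_hom : forall (l : R) X, 0 <= l -> pl_Linfp P B X ->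
     {ae P, forall w, m (fun u => l * X u) w = l * m X w}).
Variable x : (T -> R) -> (T -> R).
Hypotheses (x_wd : forall X X', L X -> L X' ->
     {ae P, forall w, X w = X' w} -> {ae P, forall w, x X w = x X' w})
  (x_range : forall X, L X -> pl_Linf P A (x X))
  (x_lin : forall (a b : R) X Y, L X -> L Y ->
     {ae P, forall w, x (fun u => a * X u + b * Y u) w = a * x X w + b * x Y w})
  (x_dom : forall X Y Z, L X -> pl_Linfp P B Y -> pl_Linfp P B Z ->
     {ae P, forall w, Z w + X w <= Y w} ->
     {ae P, forall w, m Z w + x X w <= M Y w}).

Local Notation LA := (pl_Linf P A).
Local Notation LB := (pl_Linf P B).
Local Notation LBp := (pl_Linfp P B).
Local Notation zero := (fun _ : T => (0:R)).

Lemma LBp0 : LBp zero.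
Proof. exact (Linfp_cst P subB (lexx (0:R))). Qed.

Lemma M0 : {ae P, forall w, M zero w = 0}.
Proof.
have := M_hom (lexx 0) LBp0.
rewrite (_ : (fun u : T => 0 * 0) = zero); last by apply/funext => u; rewrite mul0r.
by apply: filterS => w ->; rewrite mul0r.
Qed.

Lemma m0 : {ae P, forall w, m zero w = 0}.
Proof.
have := m_hom (lexx 0) LBp0.
rewrite (_ : (fun u : T => 0 * 0) = zero); last by apply/funext => u; rewrite mul0r.
by apply: filterS => w ->; rewrite mul0r.
Qed.

Lemma x0 : {ae P, forall w, x zero w = 0}.
Proof.
have := x_lin 0 0 L0 L0.
rewrite (_ : (fun u : T => 0 * 0 + 0 * 0) = zero); last first.
  by apply/funext => u; rewrite mul0r addr0.
by apply: filterS => w ->; rewrite !mul0r addr0.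
Qed.

Lemma mM Y Z : LBp Y -> LBp Z -> {ae P, forall w, Z w <= Y w} ->
  {ae P, forall w, m Z w <= M Y w}.
Proof.
move=> hY hZ hZY.
have : {ae P, forall w, Z w + zero w <= Y w}.
  by apply: (ae1 hZY) => w; rewrite addr0.
move/(x_dom L0 hY hZ) => h.
by apply: (ae2 h x0) => w h1 h2; move: h1; rewrite h2 addr0.
Qed.

Definition pos (X : T -> R) := fun w => Num.max (X w) 0.
Definition neg (X : T -> R) := fun w => Num.max (- X w) 0.

Lemma pos_LBp X : LB X -> LBp (pos X).
Proof. by move=> hX; rewrite /pos; exact (Linfp_pos subB hX). Qed.

Lemma neg_LBp X : LB X -> LBp (neg X).
Proof. by move=> hX; rewrite /neg; exact (Linfp_pos subB (Linf_opp subB hX)). Qed.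

Definition Fam (X : T -> R) : (T -> R) -> Prop := fun f =>
  exists Y Z, [/\ LBp Y, LBp Z, {ae P, forall w, Z w + X w <= Y w} &
    f = (fun w => M Y w - m Z w)].

Lemma Fam_LA X f : Fam X f -> LA f.
Proof.
move=> [Y [Z [hY hZ _ ->]]]; apply: (Linf_sub subA).
- exact: Linfp_Linf (M_range hY).
- exact: Linfp_Linf (m_range hZ).
Qed.

Lemma Fam_mem X : LB X -> Fam X (fun w => M (pos X) w - m (neg X) w).
Proof.
move=> hX; exists (pos X), (neg X); split => //;
  [exact: pos_LBp|exact: neg_LBp|].
apply: aeW => w; rewrite /pos /neg.
have := posneg (X w); lra.
Qed.

Lemma Fam_lb X : LB X -> forall f, Fam X f ->
  {ae P, forall w, - (M (neg X) w - m (pos X) w) <= f w}.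
Proof.
move=> hX f [Y [Z [hY hZ hZY ->]]].
have hY' := neg_LBp hX; have hZ' := pos_LBp hX.
have h1 := M_subadd hY hY'.
have h2 := m_superadd hZ hZ'.
have h3 := mM (Linfp_add subB hY hY') (Linfp_add subB hZ hZ')
  ltac:(apply: (ae1 hZY) => w; rewrite /pos /neg; have := posneg (X w); lra).
apply: (ae3 h1 h2 h3) => w; lra.
Qed.

Definition IsInf (F : (T -> R) -> Prop) (h : T -> R) :=
  [/\ LA h, (forall f, F f -> {ae P, forall w, h w <= f w}) &
    (forall k, (forall f, F f -> {ae P, forall w, k w <= f w}) ->
      {ae P, forall w, k w <= h w})].

Definition pF (F : (T -> R) -> Prop) : T -> R :=
  match pselect (exists h, IsInf F h) with
  | left e => proj1_sig (cid e) | right _ => zero end.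

Definition p X := pF (Fam X).

Lemma pP X : LB X -> IsInf (Fam X) (p X).
Proof.
move=> hX; rewrite /p /pF; case: pselect => [e|ne].
  exact: (proj2_sig (cid e)).
exfalso; apply: ne.
have [h [h1 [h2 h3]]] := essinf_ex subA (Fam_mem hX) (@Fam_LA X)
  (Linf_opp subA (Linf_sub subA (Linfp_Linf (M_range (neg_LBp hX)))
     (Linfp_Linf (m_range (pos_LBp hX))))) (Fam_lb hX).
by exists h; split.
Qed.

Lemma p_LA X : LB X -> LA (p X).
Proof. by case/pP. Qed.

Lemma p_wd X X' : {ae P, forall w, X w = X' w} -> p X = p X'.
Proof.
move=> e; rewrite /p; congr pF; apply/funext => f; apply/propext.
split => -[Y [Z [hY hZ hZY ->]]]; exists Y, Z; split => //.
- by apply: (ae2 hZY e) => w h1 h2; rewrite -h2.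
- by apply: (ae2 hZY e) => w h1 h2; rewrite h2.
Qed.

Lemma p_le X Y Z : LB X -> LBp Y -> LBp Z -> {ae P, forall w, Z w + X w <= Y w} ->
  {ae P, forall w, p X w <= M Y w - m Z w}.
Proof. by move=> hX hY hZ hZY; case: (pP hX) => _ + _; apply; exists Y, Z. Qed.

Lemma x_le_p X : L X -> {ae P, forall w, x X w <= p X w}.
Proof.
move=> hX; case: (pP (L_sub hX)) => _ _; apply.
move=> f [Y [Z [hY hZ hZY ->]]].
by apply: (ae1 (x_dom hX hY hZ hZY)) => w; lra.
Qed.

Lemma p_sub X1 X2 : LB X1 -> LB X2 ->
  {ae P, forall w, p (fun u => X1 u + X2 u) w <= p X1 w + p X2 w}.
Proof.
move=> h1 h2; have h12 := Linf_add subB h1 h2.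
have step1 f1 f2 : Fam X1 f1 -> Fam X2 f2 ->
    {ae P, forall w, p (fun u => X1 u + X2 u) w <= f1 w + f2 w}.
  move=> [Y1 [Z1 [hY1 hZ1 e1 ->]]] [Y2 [Z2 [hY2 hZ2 e2 ->]]].
  have hY := Linfp_add subB hY1 hY2; have hZ := Linfp_add subB hZ1 hZ2.
  have := p_le h12 hY hZ ltac:(by apply: (ae2 e1 e2) => w; lra).
  move=> hp; apply: (ae3 hp (M_subadd hY1 hY2) (m_superadd hZ1 hZ2)) => w; lra.
have step2 f2 : Fam X2 f2 ->
    {ae P, forall w, p (fun u => X1 u + X2 u) w - f2 w <= p X1 w}.
  move=> F2; case: (pP h1) => _ _; apply => f1 F1.
  by apply: (ae1 (step1 _ _ F1 F2)) => w; lra.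
have : {ae P, forall w, p (fun u => X1 u + X2 u) w - p X1 w <= p X2 w}.
  case: (pP h2) => _ _; apply => f2 F2.
  by apply: (ae1 (step2 _ F2)) => w; lra.
by move=> hh; apply: (ae1 hh) => w; lra.
Qed.

Lemma p_hom (l : R) X : 0 < l -> LB X ->
  {ae P, forall w, p (fun u => l * X u) w = l * p X w}.
Proof.
move=> l0 hX; have hlX := Linf_scal subB l hX.
have l0' : 0 <= l^-1 by rewrite invr_ge0 ltW.
have le1 : {ae P, forall w, l * p X w <= p (fun u => l * X u) w}.
  case: (pP hlX) => _ _; apply => f [Y [Z [hY hZ e ->]]].
  have hY' := Linfp_scal subB l0' hY; have hZ' := Linfp_scal subB l0' hZ.
  have := p_le hX hY' hZ' ltac:(apply: (ae1 e) => w hw;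
    rewrite -(mulKf (lt0r_neq0 l0) (X w)) -mulrDr ler_wpM2l //).
  have eY : {ae P, forall w, M Y w = l * M (fun u => l^-1 * Y u) w}.
    have := M_hom (ltW l0) hY'.
    rewrite (_ : (fun u => l * (l^-1 * Y u)) = Y); last first.
      by apply/funext => u; rewrite mulVKf // lt0r_neq0.
    by [].
  have eZ : {ae P, forall w, m Z w = l * m (fun u => l^-1 * Z u) w}.
    have := m_hom (ltW l0) hZ'.
    rewrite (_ : (fun u => l * (l^-1 * Z u)) = Z); last first.
      by apply/funext => u; rewrite mulVKf // lt0r_neq0.
    by [].
  move=> hp; apply: (ae3 hp eY eZ) => w h1 -> ->.
  by rewrite -mulrBr ler_wpM2l // ltW.
have le2 : {ae P, forall w, l^-1 * p (fun u => l * X u) w <= p X w}.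
  case: (pP hX) => _ _; apply => f [Y [Z [hY hZ e ->]]].
  have hY' := Linfp_scal subB (ltW l0) hY; have hZ' := Linfp_scal subB (ltW l0) hZ.
  have := p_le hlX hY' hZ' ltac:(apply: (ae1 e) => w hw;
    rewrite -mulrDr; apply: ler_wpM2l => //; exact: ltW).
  move=> hp; apply: (ae3 hp (M_hom (ltW l0) hY) (m_hom (ltW l0) hZ)) => w h1 e1 e2.
  move: h1; rewrite e1 e2 -mulrBr => h1.
  by rewrite ler_pdivrMl.
apply: (ae2 le1 le2) => w h1 h2; apply/eqP; rewrite eq_le h1 andbT.
by rewrite -ler_pdivrMl.
Qed.

Record good (V : (T -> R) -> Prop) (y : (T -> R) -> T -> R) : Prop := Good {
  gL : forall X, L X -> V X;
  gB : forall X, V X -> LB X;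
  gLin : forall a b X Y, V X -> V Y -> V (fun w => a * X w + b * Y w);
  gAe : forall X X', V X -> {ae P, forall w, X w = X' w} -> V X';
  gA : forall X, V X -> LA (y X);
  gWd : forall X X', V X -> V X' -> {ae P, forall w, X w = X' w} ->
    {ae P, forall w, y X w = y X' w};
  gyLin : forall a b X Y, V X -> V Y ->
    {ae P, forall w, y (fun u => a * X u + b * Y u) w = a * y X w + b * y Y w};
  gx : forall X, L X -> {ae P, forall w, y X w = x X w};
  gp : forall X, V X -> {ae P, forall w, y X w <= p X w} }.

Section goodlemmas.
Variables (V : (T -> R) -> Prop) (y : (T -> R) -> T -> R).
Hypothesis hg : good V y.

Lemma gV0 : V zero.
Proof. exact: (gL hg L0). Qed.

Lemma gVadd X Y : V X -> V Y -> V (fun w => X w + Y w).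
Proof.
move=> hX hY; have := gLin hg 1 1 hX hY.
by rewrite (_ : (fun w => 1 * X w + 1 * Y w) = (fun w => X w + Y w)) //;
  apply/funext => w; rewrite !mul1r.
Qed.

Lemma gVsub X Y : V X -> V Y -> V (fun w => X w - Y w).
Proof.
move=> hX hY; have := gLin hg 1 (-1) hX hY.
by rewrite (_ : (fun w => 1 * X w + -1 * Y w) = (fun w => X w - Y w)) //;
  apply/funext => w; rewrite mul1r mulN1r.
Qed.

Lemma gVscal c X : V X -> V (fun w => c * X w).
Proof.
move=> hX; have := gLin hg c 0 hX hX.
by rewrite (_ : (fun w => c * X w + 0 * X w) = (fun w => c * X w)) //;
  apply/funext => w; rewrite mul0r addr0.
Qed.

Lemma gyadd X Y : V X -> V Y ->
  {ae P, forall w, y (fun u => X u + Y u) w = y X w + y Y w}.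
Proof.
move=> hX hY; have := gyLin hg 1 1 hX hY.
rewrite (_ : (fun u => 1 * X u + 1 * Y u) = (fun u => X u + Y u)); last first.
  by apply/funext => w; rewrite !mul1r.
by apply: filterS => w ->; rewrite !mul1r.
Qed.

Lemma gysub X Y : V X -> V Y ->
  {ae P, forall w, y (fun u => X u - Y u) w = y X w - y Y w}.
Proof.
move=> hX hY; have := gyLin hg 1 (-1) hX hY.
rewrite (_ : (fun u => 1 * X u + -1 * Y u) = (fun u => X u - Y u)); last first.
  by apply/funext => w; rewrite mul1r mulN1r.
by apply: filterS => w ->; rewrite mul1r mulN1r.
Qed.

Lemma gyscal c X : V X ->
  {ae P, forall w, y (fun u => c * X u) w = c * y X w}.
Proof.
move=> hX; have := gyLin hg c 0 hX hX.
rewrite (_ : (fun u => c * X u + 0 * X u) = (fun u => c * X u)); last first.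
  by apply/funext => w; rewrite mul0r addr0.
by apply: filterS => w ->; rewrite mul0r addr0.
Qed.

End goodlemmas.

Lemma good_base : good L x.
Proof.
split.
- by [].
- exact: L_sub.
- exact: L_lin.
- exact: L_ae.
- exact: x_range.
- exact: x_wd.
- exact: x_lin.
- by move=> X _; exact: aeW.
- exact: x_le_p.
Qed.
Section extension.
Variables (V : (T -> R) -> Prop) (y : (T -> R) -> T -> R).
Hypothesis hg : good V y.
Variable X0 : T -> R.
Hypotheses (hX0 : LB X0) (nX0 : ~ V X0).

Definition Gfam : (T -> R) -> Prop := fun f =>
  exists v, V v /\ f = (fun w => y v w + p (fun u => X0 u - v u) w).

Lemma Gfam_mem : Gfam (fun w => y zero w + p (fun u => X0 u - zero u) w).
Proof. by exists zero; split => //; exact (gV0 hg). Qed.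

Lemma Gfam_LA f : Gfam f -> LA f.
Proof.
move=> [v [hv ->]]; apply: (Linf_add subA); first exact (gA hg hv).
apply: p_LA; apply: (Linf_sub subB) => //; exact (gB hg hv).
Qed.

Lemma Gfam_lb f : Gfam f -> {ae P, forall w, - p (fun u => - X0 u) w <= f w}.
Proof.
move=> [v [hv ->]].
have hvB := gB hg hv.
have hmv : V (fun w => - v w).
  by rewrite (_ : (fun w => - v w) = (fun w => 0 - v w));
    [exact (gVsub hg (gV0 hg) hv)|apply/funext => w; rewrite sub0r].
have e1 : {ae P, forall w, y (fun u => - v u) w = - y v w}.
  have := gyscal hg (-1) hv.
  rewrite (_ : (fun u => -1 * v u) = (fun u => - v u)); last first.
    by apply/funext => w; rewrite mulN1r.
  by apply: filterS => w ->; rewrite mulN1r.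
have e2 := gp hg hmv.
have e3 := p_sub (Linf_opp subB hX0) (Linf_sub subB hX0 hvB).
rewrite (_ : (fun u => - X0 u + (X0 u - v u)) = (fun u => - v u)) in e3; last first.
  by apply/funext => w; rewrite addrA addNr add0r.
by apply: (ae3 e1 e2 e3) => w; lra.
Qed.

Definition hext : T -> R :=
  pF Gfam.

Lemma hextP : IsInf Gfam hext.
Proof.
rewrite /hext /pF; case: pselect => [e|ne]; first exact ((proj2_sig (cid e))).
exfalso; apply: ne.
have [h [h1 [h2 h3]]] := essinf_ex subA Gfam_mem Gfam_LA
  (Linf_opp subA (p_LA (Linf_opp subB hX0))) Gfam_lb.
by exists h; split.
Qed.

Lemma hext_LA : LA hext. Proof. by case: hextP. Qed.

Lemma hup v : V v -> {ae P, forall w, hext w <= y v w + p (fun u => X0 u - v u) w}.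
Proof. by move=> hv; case: hextP => _ + _; apply; exists v. Qed.

Lemma hlow v : V v -> {ae P, forall w, y v w - p (fun u => v u - X0 u) w <= hext w}.
Proof.
move=> hv; case: hextP => _ _; apply => _ [v' [hv' ->]].
have hvB := gB hg hv; have hv'B := gB hg hv'.
have e1 := gysub hg hv hv'.
have e2 := gp hg (gVsub hg hv hv').
have e3 := p_sub (Linf_sub subB hvB hX0) (Linf_sub subB hX0 hv'B).
rewrite (_ : (fun u => v u - X0 u + (X0 u - v' u)) = (fun u => v u - v' u)) in e3;
  last by apply/funext => w; rewrite addrA subrK.
by apply: (ae3 e1 e2 e3) => w; lra.
Qed.

Lemma uniq_dec v1 v2 t1 t2 : V v1 -> V v2 ->
  {ae P, forall w, v1 w + t1 * X0 w = v2 w + t2 * X0 w} ->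
  t1 = t2 /\ {ae P, forall w, v1 w = v2 w}.
Proof.
move=> h1 h2 e.
have tt : t1 = t2.
  apply/eqP; apply/negPn/negP => nt; apply: nX0.
  have hV := gVscal hg (t1 - t2)^-1 (gVsub hg h2 h1).
  apply: (gAe hg hV); apply: (ae1 e) => w hw.
  have : v2 w - v1 w = (t1 - t2) * X0 w by rewrite mulrBl; lra.
  by move=> ->; rewrite mulKf // subr_eq0.
split => //; apply: (ae1 e) => w; rewrite tt; exact: addIr.
Qed.

Definition Ve : (T -> R) -> Prop := fun X =>
  exists v t, V v /\ {ae P, forall w, X w = v w + t * X0 w}.

Definition ye (X : T -> R) : T -> R :=
  match pselect (exists vt : (T -> R) * R,
      V vt.1 /\ {ae P, forall w, X w = vt.1 w + vt.2 * X0 w}) with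
  | left e => let vt := proj1_sig (cid e) in (fun w => y vt.1 w + vt.2 * hext w)
  | right _ => zero end.

Lemma ye_spec X v t : V v -> {ae P, forall w, X w = v w + t * X0 w} ->
  {ae P, forall w, ye X w = y v w + t * hext w}.
Proof.
move=> hv e; rewrite /ye; case: pselect => [ex|ne]; last first.
  by exfalso; apply: ne; exists (v, t).
case: (cid ex) => -[v' t'] /= [hv' e'].
have [tt ee] := uniq_dec (t1 := t') (t2 := t) hv' hv ltac:(by apply: (ae2 e e') => w h1 h2; rewrite -h1 -h2).
have := gWd hg hv' hv ee.
by apply: filterS => w ->; rewrite tt.
Qed.

Lemma aux1 (t a b hh : R) : 0 < t -> hh <= - t^-1 * a + t^-1 * b -> a + t * hh <= b.
Proof.
move=> t0 H; have : t * hh <= t * (- t^-1 * a + t^-1 * b) by rewrite ler_pM2l.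
have -> : t * (- t^-1 * a + t^-1 * b) = b - a by field; exact: lt0r_neq0.
lra.
Qed.

Lemma aux2 (t a b hh : R) : t < 0 -> (-t)^-1 * a - (-t)^-1 * b <= hh -> a + t * hh <= b.
Proof.
move=> t0 H; have t0' : 0 < -t by rewrite oppr_gt0.
have : (-t) * ((-t)^-1 * a - (-t)^-1 * b) <= (-t) * hh by rewrite ler_pM2l.
have -> : (-t) * ((-t)^-1 * a - (-t)^-1 * b) = a - b by field; exact: ltr0_neq0.
lra.
Qed.

Lemma key_ineq v : V v -> forall t,
  {ae P, forall w, y v w + t * hext w <= p (fun u => v u + t * X0 u) w}.
Proof.
move=> hv t.
have hZ : LB (fun u => v u + t * X0 u).
  exact (Linf_add subB (gB hg hv) (Linf_scal subB t hX0)).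
have [t0|t0|<-] := ltrgtP 0 t.
- have hv' := gVscal hg (- t^-1) hv.
  have e1 := hup hv'.
  rewrite (_ : (fun u => X0 u - - t^-1 * v u) =
    (fun u => t^-1 * (v u + t * X0 u))) in e1; last first.
    by apply/funext => u; field; exact: lt0r_neq0.
  have e2 := p_hom (l := t^-1) ltac:(by rewrite invr_gt0) hZ.
  have e3 := gyscal hg (- t^-1) hv.
  apply: (ae3 e1 e2 e3) => w h1 h2 h3; apply: aux1 t0 _.
  by rewrite -h2 -h3.
- have t0' : 0 < -t by rewrite oppr_gt0.
  have hv' := gVscal hg ((- t)^-1) hv.
  have e1 := hlow hv'.
  rewrite (_ : (fun u => (- t)^-1 * v u - X0 u) =
    (fun u => (- t)^-1 * (v u + t * X0 u))) in e1; last first.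
    by apply/funext => u; field; exact: ltr0_neq0.
  have e2 := p_hom (l := (- t)^-1) ltac:(by rewrite invr_gt0) hZ.
  have e3 := gyscal hg ((- t)^-1) hv.
  apply: (ae3 e1 e2 e3) => w h1 h2 h3; apply: aux2 t0 _.
  by rewrite -h2 -h3.
- rewrite (_ : (fun u => v u + 0 * X0 u) = v); last first.
    by apply/funext => u; rewrite mul0r addr0.
  by apply: (ae1 (gp hg hv)) => w; rewrite mul0r addr0.
Qed.

Lemma Ve_good : good Ve ye.
Proof.
split.
- move=> X hX; exists X, 0; split; first exact (gL hg hX).
  by apply: aeW => w; rewrite mul0r addr0.
- move=> X [v [t [hv e]]].
  apply: (Linf_ae (f := fun w => v w + t * X0 w)).
    have := Linf_lin subB 1 t (gB hg hv) hX0.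
    by rewrite (_ : (fun w => 1 * v w + t * X0 w) = (fun w => v w + t * X0 w));
       [|apply/funext => w; rewrite mul1r].
  by apply: (ae1 e) => w ->.
- move=> a b X Y [v1 [t1 [hv1 e1]]] [v2 [t2 [hv2 e2]]].
  exists (fun w => a * v1 w + b * v2 w), (a * t1 + b * t2); split.
    exact (gLin hg a b hv1 hv2).
  by apply: (ae2 e1 e2) => w -> ->; rewrite !mulrDr !mulrDl !mulrA; lra.
- move=> X X' [v [t [hv e]]] e'; exists v, t; split => //.
  by apply: (ae2 e e') => w <- ->.
- move=> X [v [t [hv e]]].
  apply: (Linf_ae (f := fun w => y v w + t * hext w)); last first.
    by apply: (ae1 (ye_spec hv e)) => w ->.
  have := Linf_lin subA 1 t (gA hg hv) hext_LA.
  by rewrite (_ : (fun w => 1 * y v w + t * hext w) = (fun w => y v w + t * hext w));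
    [|apply/funext => w; rewrite mul1r].
- move=> X X' [v [t [hv e]]] _ e'.
  have e2 : {ae P, forall w, X' w = v w + t * X0 w}.
    by apply: (ae2 e e') => w <- <-.
  by apply: (ae2 (ye_spec hv e) (ye_spec hv e2)) => w -> ->.
- move=> a b X Y [v1 [t1 [hv1 e1]]] [v2 [t2 [hv2 e2]]].
  have e3 : {ae P, forall w, a * X w + b * Y w =
      (a * v1 w + b * v2 w) + (a * t1 + b * t2) * X0 w}.
    by apply: (ae2 e1 e2) => w -> ->; rewrite !mulrDr !mulrDl !mulrA; lra.
  have := ye_spec (gLin hg a b hv1 hv2) e3.
  move=> h3; apply: (ae4 h3 (ye_spec hv1 e1) (ye_spec hv2 e2) (gyLin hg a b hv1 hv2)).
  by move=> w -> -> -> ->; rewrite !mulrDr !mulrDl !mulrA; lra.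
- move=> X hX.
  have e : {ae P, forall w, X w = X w + 0 * X0 w}.
    by apply: aeW => w; rewrite mul0r addr0.
  apply: (ae2 (ye_spec (gL hg hX) e) (gx hg hX)) => w -> ->.
  by rewrite mul0r addr0.
- move=> X [v [t [hv e]]].
  rewrite (p_wd e).
  by apply: (ae2 (ye_spec hv e) (key_ineq hv t)) => w ->.
Qed.

Lemma Ve_sup X : V X -> Ve X.
Proof.
move=> hX; exists X, 0; split => //.
by apply: aeW => w; rewrite mul0r addr0.
Qed.

Lemma Ve_eq X : V X -> {ae P, forall w, y X w = ye X w}.
Proof.
move=> hX.
have e : {ae P, forall w, X w = X w + 0 * X0 w}.
  by apply: aeW => w; rewrite mul0r addr0.
by apply: (ae1 (ye_spec hX e)) => w ->; rewrite mul0r addr0.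
Qed.

Lemma Ve_X0 : Ve X0.
Proof.
exists zero, 1; split; first exact (gV0 hg).
by apply: aeW => w; rewrite mul1r add0r.
Qed.

End extension.
Record pe := PE { pV : (T -> R) -> Prop; py : (T -> R) -> T -> R;
  pg : good pV py }.

Definition le_pe (s t : pe) : bool :=
  `[< (forall X, pV s X -> pV t X) /\
      (forall X, pV s X -> {ae P, forall w, py s X w = py t X w}) >].

Lemma le_peP s t : le_pe s t <-> (forall X, pV s X -> pV t X) /\
      (forall X, pV s X -> {ae P, forall w, py s X w = py t X w}).
Proof. by split => [/asboolP|?]; [|apply/asboolP]. Qed.

Lemma le_pe_refl s : le_pe s s.
Proof. by apply/le_peP; split => // X _; exact: aeW. Qed.

Lemma le_pe_trans r s t : le_pe r s -> le_pe s t -> le_pe r t.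
Proof.
move=> /le_peP[h1 h2] /le_peP[h3 h4]; apply/le_peP; split => X hX.
  exact: h3 (h1 _ hX).
by apply: (ae2 (h2 _ hX) (h4 _ (h1 _ hX))) => w -> ->.
Qed.

Section chain.
Variable Ch : set pe.
Hypothesis tot : total_on Ch le_pe.
Variable i0 : pe.
Hypothesis Chi0 : Ch i0.

Definition VU : (T -> R) -> Prop := fun X => exists i, Ch i /\ pV i X.
Definition yU (X : T -> R) : T -> R :=
  match pselect (exists i, Ch i /\ pV i X) with
  | left e => py (proj1_sig (cid e)) X | right _ => zero end.

Lemma yU_spec i X : Ch i -> pV i X -> {ae P, forall w, yU X w = py i X w}.
Proof.
move=> Ci hX; rewrite /yU; case: pselect => [e|ne]; last first.
  by exfalso; apply: ne; exists i.
case: (cid e) => j /= [Cj hj].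
case: (tot Cj Ci) => /le_peP[_ h].
  exact: h.
by apply: (ae1 (h _ hX)) => w ->.
Qed.

Lemma dom2 i j : Ch i -> Ch j -> exists k, [/\ Ch k, le_pe i k & le_pe j k].
Proof.
move=> Ci Cj; case: (tot Ci Cj) => h.
  by exists j; split => //; exact: le_pe_refl.
by exists i; split => //; exact: le_pe_refl.
Qed.

Lemma lift_V i k X : le_pe i k -> pV i X -> pV k X.
Proof. by move=> /le_peP[h _]; exact: h. Qed.

Lemma VU_good : good VU yU.
Proof.
split.
- move=> X hX; exists i0; split => //; exact (gL (pg i0) hX).
- move=> X [i [Ci hX]]; exact (gB (pg i) hX).
- move=> a b X Y [i [Ci hX]] [j [Cj hY]].
  have [k [Ck ik jk]] := dom2 Ci Cj.
  exists k; split => //; apply: (gLin (pg k)); [exact: lift_V ik hX|exact: lift_V jk hY].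
- move=> X X' [i [Ci hX]] e; exists i; split => //; exact (gAe (pg i) hX e).
- move=> X [i [Ci hX]]; apply: (Linf_ae (f := py i X)).
    exact (gA (pg i) hX).
  by apply: (ae1 (yU_spec Ci hX)) => w ->.
- move=> X X' [i [Ci hX]] [j [Cj hX']] e.
  have [k [Ck ik jk]] := dom2 Ci Cj.
  have hXk := lift_V ik hX; have hX'k := lift_V jk hX'.
  apply: (ae3 (yU_spec Ck hXk) (yU_spec Ck hX'k) (gWd (pg k) hXk hX'k e)).
  by move=> w -> ->.
- move=> a b X Y [i [Ci hX]] [j [Cj hY]].
  have [k [Ck ik jk]] := dom2 Ci Cj.
  have hXk := lift_V ik hX; have hYk := lift_V jk hY.
  have hZk := gLin (pg k) a b hXk hYk.
  apply: (ae4 (yU_spec Ck hZk) (yU_spec Ck hXk) (yU_spec Ck hYk) (gyLin (pg k) a b hXk hYk)).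
  by move=> w -> -> ->.
- move=> X hX; have hX0 := gL (pg i0) hX.
  by apply: (ae2 (yU_spec Chi0 hX0) (gx (pg i0) hX)) => w -> ->.
- move=> X [i [Ci hX]].
  by apply: (ae2 (yU_spec Ci hX) (gp (pg i) hX)) => w ->.
Qed.

Lemma VU_ub s : Ch s -> le_pe s (PE VU_good).
Proof.
move=> Cs; apply/le_peP; split => /= X hX; first by exists s.
by apply: (ae1 (yU_spec Cs hX)) => w ->.
Qed.

End chain.

Lemma chain_ub (Ch : set pe) : total_on Ch le_pe ->
  exists t, forall s, Ch s -> le_pe s t.
Proof.
move=> tot; case: (pselect (exists i, Ch i)) => [[i0 Ci0]|ne].
  by exists (PE (VU_good tot Ci0)) => s Cs; exact: VU_ub.
by exists (PE good_base) => s Cs; exfalso; apply: ne; exists s.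
Qed.

Lemma exists_max : exists V y, good V y /\ forall X, LB X -> V X.
Proof.
have [t tmax] := @ZL_preorder pe (PE good_base) le_pe le_pe_refl le_pe_trans chain_ub.
exists (pV t), (py t); split; first exact: pg.
move=> X0 hX0; apply/not_notP => nX0.
pose s := PE (Ve_good (pg t) hX0 nX0).
have ts : le_pe t s.
  apply/le_peP; split => X hX; first exact (Ve_sup X0 hX).
  exact (Ve_eq (pg t) nX0 hX).
have /le_peP[st _] := tmax s ts.
exact (nX0 (st _ (Ve_X0 (pg t) X0))).
Qed.
Lemma main_result : exists x' : (T -> R) -> (T -> R),
    (forall X, pl_Linf P B X -> pl_Linf P A (x' X)) /\
        (forall X X', pl_Linf P B X -> pl_Linf P B X' ->
           {ae P, forall w, X w = X' w} -> {ae P, forall w, x' X w = x' X' w}) /\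
        (forall (a b : R) X Y, pl_Linf P B X -> pl_Linf P B Y ->
           {ae P, forall w, x' (fun u => a * X u + b * Y u) w
                            = a * x' X w + b * x' Y w}) /\
        (forall X, L X -> {ae P, forall w, x' X w = x X w}) /\
        (forall X X', pl_Linf P B X -> pl_Linf P B X' ->
           {ae P, forall w, X' w <= X w} -> {ae P, forall w, x' X' w <= x' X w}) /\
        (forall (Xn : nat -> T -> R) X, (forall n, pl_Linf P B (Xn n)) -> pl_Linf P B X ->
           {ae P, forall w, forall n, Xn n.+1 w <= Xn n w} ->
           {ae P, forall w, (fun n => Xn n w) @ \oo --> X w} ->
           {ae P, forall w, forall n, x' (Xn n.+1) w <= x' (Xn n) w} /\
           {ae P, forall w, (fun n => x' (Xn n) w) @ \oo --> x' X w}) /\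
        (forall X Y Z, pl_Linf P B X -> pl_Linfp P B Y -> pl_Linfp P B Z ->
           {ae P, forall w, Z w + X w <= Y w} ->
           {ae P, forall w, m Z w + x' X w <= M Y w})
      /\ (forall X, pl_Linfp P B X ->
           {ae P, forall w, m X w <= x' X w <= M X w}).
Proof.
have [V [y [hg hall]]] := exists_max.
have dom X Y Z : LB X -> LBp Y -> LBp Z -> {ae P, forall w, Z w + X w <= Y w} ->
    {ae P, forall w, m Z w + y X w <= M Y w}.
  move=> hX hY hZ e.
  by apply: (ae2 (gp hg (hall _ hX)) (p_le hX hY hZ e)) => w; lra.
have mono X X' : LB X -> LB X' -> {ae P, forall w, X' w <= X w} ->
    {ae P, forall w, y X' w <= y X w}.
  move=> hX hX' e.
  have hD := Linf_sub subB hX' hX.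
  have := dom _ _ _ hD LBp0 LBp0 ltac:(by apply: (ae1 e) => w; lra).
  move=> h1; apply: (ae4 h1 M0 m0 (gysub hg (hall _ hX') (hall _ hX))) => w.
  move=> h2 h3 h4 h5; lra.
have y0 : {ae P, forall w, y zero w = 0}.
  by apply: (ae2 (gx hg L0) x0) => w ->.
exists y; split; [|split; [|split; [|split; [|split; [|split; [|split]]]]]].
- by move=> X hX; exact (gA hg (hall _ hX)).
- by move=> X X' hX hX'; exact (gWd hg (hall _ hX) (hall _ hX')).
- by move=> a b X Y hX hY; exact (gyLin hg a b (hall _ hX) (hall _ hY)).
- exact: (gx hg).
- exact: mono.
- move=> Xn X hXn hX dec cv; split.
    apply: ae_foralln => n; apply: mono => //.
    by apply: (ae1 dec) => w; apply.
  pose D n := fun u => Xn n u - X u.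
  have hD n : LBp (D n).
    split; first exact (Linf_sub subB (hXn n) hX).
    apply: (ae2 dec cv) => w hd hc.
    have ni : nonincreasing_seq (fun n => Xn n w) by apply/nonincreasing_seqP.
    have := nonincreasing_cvgn_ge ni (cvgP _ hc) n.
    by rewrite (cvg_lim _ hc) // /D subr_ge0.
  have Mcv := M_regular hD
    ltac:(by apply: (ae1 dec) => w hw n; rewrite /D lerD2r)
    ltac:(by apply: (ae1 cv) => w hw; apply/subr_cvg0).
  have bnd : {ae P, forall w, forall n,
      0 <= y (Xn n) w - y X w <= M (D n) w}.
    apply: ae_foralln => n.
    have e1 := gysub hg (hall _ (hXn n)) (hall _ hX).
    have lo := mono (D n) zero (hD n).1 (Linfp_Linf LBp0) (hD n).2.
    have up := dom (D n) (D n) zero (hD n).1 (hD n) LBp0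
      ltac:(by apply: aeW => w; rewrite add0r).
    apply: (ae5 e1 lo up y0 m0) => w h1 h2 h3 h4 h5.
    rewrite /D in h1 h2 h3.
    by rewrite -h1; apply/andP; split; lra.
  apply: (ae2 bnd Mcv) => w hb hM.
  apply/subr_cvg0.
  apply: (@squeeze_cvgr _ _ _ _ (fun _ => 0) (fun n => M (D n) w)).
  - by apply: nearW => n; exact: hb.
  - exact: cvg_cst.
  - exact: hM.
- exact: dom.
- move=> X hX.
  have hX' := Linfp_Linf hX.
  have up := dom X X zero hX' hX LBp0 ltac:(by apply: aeW => w; rewrite add0r).
  have hN := Linf_opp subB hX'.
  have lo := dom (fun u => - X u) zero X hN LBp0 hX ltac:(by apply: aeW => w; rewrite addrN).
  have eN : {ae P, forall w, y (fun u => - X u) w = - y X w}.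
    have := gyscal hg (-1) (hall _ hX').
    rewrite (_ : (fun u => -1 * X u) = (fun u => - X u)); last first.
      by apply/funext => w; rewrite mulN1r.
    by apply: filterS => w ->; rewrite mulN1r.
  apply: (ae5 up lo eN M0 m0) => w h1 h2 h3 h4 h5.
  by apply/andP; split; lra.
Qed.
End mainsec.

Unset Implicit Arguments.

Theorem theorem3p11 (d : measure_display) (T : measurableType d) (R : realType)
  (P : probability T R)
  (Pcomplete : measure_is_complete P)
  (A B : set (set T))
  (subA : pl_sub_sigma_algebra A) (subB : pl_sub_sigma_algebra B)
  (AB : A `<=` B)
  (Bgen : exists E : nat -> set T, B = <<s range E `|` pl_null_events P >>)
  (L : (T -> R) -> Prop)
  (L_sub : forall X, L X -> pl_Linf P B X)
  (L_ae : forall X X', L X -> {ae P, forall w, X w = X' w} -> L X')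
  (L0 : L (fun _ => 0))
  (L_lin : forall (a b : R) X Y, L X -> L Y -> L (fun w => a * X w + b * Y w))
  (M m : (T -> R) -> (T -> R))
  (M_wd : forall X X', pl_Linfp P B X -> pl_Linfp P B X' ->
     {ae P, forall w, X w = X' w} -> {ae P, forall w, M X w = M X' w})
  (M_range : forall X, pl_Linfp P B X -> pl_Linfp P A (M X))
  (M_subadd : forall X Y, pl_Linfp P B X -> pl_Linfp P B Y ->
     {ae P, forall w, M (fun u => X u + Y u) w <= M X w + M Y w})
  (M_hom : forall (l : R) X, 0 <= l -> pl_Linfp P B X ->
     {ae P, forall w, M (fun u => l * X u) w = l * M X w})
  (M_regular : forall Xn : nat -> T -> R, (forall n, pl_Linfp P B (Xn n)) ->
     {ae P, forall w, forall n, Xn n.+1 w <= Xn n w} ->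
     {ae P, forall w, (fun n => Xn n w) @ \oo --> (0:R)} ->
     {ae P, forall w, (fun n => M (Xn n) w) @ \oo --> (0:R)})
  (m_wd : forall X X', pl_Linfp P B X -> pl_Linfp P B X' ->
     {ae P, forall w, X w = X' w} -> {ae P, forall w, m X w = m X' w})
  (m_range : forall X, pl_Linfp P B X -> pl_Linfp P A (m X))
  (m_superadd : forall X Y, pl_Linfp P B X -> pl_Linfp P B Y ->
     {ae P, forall w, m X w + m Y w <= m (fun u => X u + Y u) w})
  (m_hom : forall (l : R) X, 0 <= l -> pl_Linfp P B X ->
     {ae P, forall w, m (fun u => l * X u) w = l * m X w})
  (x : (T -> R) -> (T -> R))
  (x_wd : forall X X', L X -> L X' ->
     {ae P, forall w, X w = X' w} -> {ae P, forall w, x X w = x X' w})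
  (x_range : forall X, L X -> pl_Linf P A (x X))
  (x_lin : forall (a b : R) X Y, L X -> L Y ->
     {ae P, forall w, x (fun u => a * X u + b * Y u) w = a * x X w + b * x Y w})
  (x_dom : forall X Y Z, L X -> pl_Linfp P B Y -> pl_Linfp P B Z ->
     {ae P, forall w, Z w + X w <= Y w} ->
     {ae P, forall w, m Z w + x X w <= M Y w}) :
  exists x' : (T -> R) -> (T -> R),
    (forall X, pl_Linf P B X -> pl_Linf P A (x' X)) /\
        (forall X X', pl_Linf P B X -> pl_Linf P B X' ->
           {ae P, forall w, X w = X' w} -> {ae P, forall w, x' X w = x' X' w}) /\
        (forall (a b : R) X Y, pl_Linf P B X -> pl_Linf P B Y ->
           {ae P, forall w, x' (fun u => a * X u + b * Y u) w
                            = a * x' X w + b * x' Y w}) /\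
        (forall X, L X -> {ae P, forall w, x' X w = x X w}) /\
        (forall X X', pl_Linf P B X -> pl_Linf P B X' ->
           {ae P, forall w, X' w <= X w} -> {ae P, forall w, x' X' w <= x' X w}) /\
        (forall (Xn : nat -> T -> R) X, (forall n, pl_Linf P B (Xn n)) -> pl_Linf P B X ->
           {ae P, forall w, forall n, Xn n.+1 w <= Xn n w} ->
           {ae P, forall w, (fun n => Xn n w) @ \oo --> X w} ->
           {ae P, forall w, forall n, x' (Xn n.+1) w <= x' (Xn n) w} /\
           {ae P, forall w, (fun n => x' (Xn n) w) @ \oo --> x' X w}) /\
        (forall X Y Z, pl_Linf P B X -> pl_Linfp P B Y -> pl_Linfp P B Z ->
           {ae P, forall w, Z w + X w <= Y w} ->
           {ae P, forall w, m Z w + x' X w <= M Y w})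
      /\ (forall X, pl_Linfp P B X ->
           {ae P, forall w, m X w <= x' X w <= M X w}).
Proof.
by apply: main_result; assumption.
Qed.
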